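(* In $\mathrm{HMF}(\mathbb{C}^2,\Gamma_W,W)$ the object $K_f$ is exceptional, i.e.\ $\mathrm{Hom}^\bullet(K_f,K_f)$ consists only of scalar multiples of the identity, in degree $0$.
   Context: Let $p,q\ge2$ be integers and $W=x^py+xy^q$. Let $L$ be the abelian group generated by $\vec x,\vec y,\vec c$ modulo $p\vec x+\vec y=\vec x+q\vec y=\vec c$; $S=\mathbb{C}[x,y]$ is $L$-graded with $\deg x=\vec x$, $\deg y=\vec y$, and $R=S/(W)$. $\mathrm{HMF}(\mathbb{C}^2,\Gamma_W,W)$ is the homotopy category of $L$-graded matrix factorisations of $W$, equivalent to $D^b(\mathrm{gr}R)/\mathrm{Perf}(\mathrm{gr}R)$, in which a finitely generated $L$-graded $R$-module is identified with its stabilisation; $\mathrm{Hom}^n(X,Y)=\mathrm{Hom}(X,Y[n])$. Let $f=x^{p-1}+y^{q-1}$ and $K_f=R/(f)$. *)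

(* Defs.v *)
From HB Require Import structures.
From mathcomp Require Import all_boot all_order all_algebra.
From mathcomp Require Import Rstruct complex.
Set Implicit Arguments. Unset Strict Implicit. Unset Printing Implicit Defensive.
Import GRing.Theory.
Local Open Scope ring_scope.

Definition CC : fieldType := (Rdefinitions.R)[i].

(* S = C[x,y], realised as {poly {poly C}}: outer variable y, inner variable x. *)
Definition Spoly := {poly {poly CC}}.
Definition xS : Spoly := ('X)%:P.
Definition yS : Spoly := 'X.
Definition coefS (P : Spoly) (a b : nat) : CC := (P`_b)`_a.

(* The grading group L = <x,y,c | p x + y = x + q y = c>.  Eliminating c, an
   element a x + b y is represented by (a,b) : int * int, and
   L = Z^2 / Z (p-1, -(q-1)).  Lequiv decides equality in L. *)
Definition Ldeg := (int * int)%type.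
Definition Ladd (u v : Ldeg) : Ldeg := (u.1 + v.1, u.2 + v.2).
Definition Lopp (u : Ldeg) : Ldeg := (- u.1, - u.2).
Definition Lsub (u v : Ldeg) : Ldeg := Ladd u (Lopp v).
Definition Lequiv (p q : nat) (u v : Ldeg) : Prop :=
  exists k : int, u.1 - v.1 = k * (p%:Z - 1) /\ u.2 - v.2 = - (k * (q%:Z - 1)).
Definition vx : Ldeg := (1, 0).
Definition vy : Ldeg := (0, 1).
Definition vc (p : nat) : Ldeg := (p%:Z, 1).

(* P is homogeneous of degree l in L (the zero polynomial is homogeneous of
   every degree); deg (x^a y^b) = a x + b y. *)
Definition homog (p q : nat) (l : Ldeg) (P : Spoly) : Prop :=
  forall a b : nat, coefS P a b != 0 -> Lequiv p q (a%:Z, b%:Z) l.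

Definition W (p q : nat) : Spoly := xS ^+ p * yS + xS * yS ^+ q.

(* A graded free S-module of rank r is given by the L-degrees of its basis
   elements.  A matrix M : 'M_(m, n) represents the map sending the j-th basis
   vector of the source to sum_i M i j e'_i; it is homogeneous of degree l iff
   each entry M i j is homogeneous of degree (dsrc j - dtgt i + l). *)
Definition homog_mx (p q : nat) m n (dtgt : 'I_m -> Ldeg) (dsrc : 'I_n -> Ldeg)
  (l : Ldeg) (M : 'M[Spoly]_(m, n)) : Prop :=
  forall i j, homog p q (Ladd (Lsub (dsrc j) (dtgt i)) l) (M i j).

#[local] Unset Implicit Arguments.
(* Matrix-factorisation data  X0 --mA--> X1 --mB--> X0(c). *)
Record MFdata := MkMF {
  r0 : nat; r1 : nat;
  d0 : 'I_r0 -> Ldeg;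
  d1 : 'I_r1 -> Ldeg;
  mA : 'M[Spoly]_(r1, r0);
  mB : 'M[Spoly]_(r0, r1)   (* X1 -> X0(c), i.e. X1 -> X0 of degree c *)
}.
#[local] Set Implicit Arguments.

Definition is_MF (p q : nat) (X : MFdata) : Prop :=
  [/\ homog_mx p q (d1 X) (d0 X) (0, 0) (mA X),
      homog_mx p q (d0 X) (d1 X) (vc p) (mB X),
      mB X *m mA X = (W p q)%:M &
      mA X *m mB X = (W p q)%:M].

(* Shift [1]:  X[1] = (X1 --(-mB)--> X0(c) --(-mA)--> X1(c)).  The basis of
   M(c) has degrees shifted by -c (M(c)_l = M_(l+c)). *)
Definition shift1 (p : nat) (X : MFdata) : MFdata :=
  @MkMF (r1 X) (r0 X) (d1 X) (fun i => Lsub (d0 X i) (vc p)) (- mB X) (- mA X).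
Definition shiftm1 (p : nat) (X : MFdata) : MFdata :=
  @MkMF (r1 X) (r0 X) (fun i => Ladd (d1 X i) (vc p)) (d0 X) (- mB X) (- mA X).
Definition shift (p : nat) (n : int) (X : MFdata) : MFdata :=
  match n with
  | Posz k => iter k (shift1 p) X
  | Negz k => iter k.+1 (shiftm1 p) X
  end.

Definition is_MFmor (p q : nat) (X Y : MFdata)
  (f0 : 'M[Spoly]_(r0 Y, r0 X)) (f1 : 'M[Spoly]_(r1 Y, r1 X)) : Prop :=
  [/\ homog_mx p q (d0 Y) (d0 X) (0, 0) f0,
      homog_mx p q (d1 Y) (d1 X) (0, 0) f1,
      f1 *m mA X = mA Y *m f0 &
      f0 *m mB X = mB Y *m f1].

Definition null_homotopic (p q : nat) (X Y : MFdata)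
  (f0 : 'M[Spoly]_(r0 Y, r0 X)) (f1 : 'M[Spoly]_(r1 Y, r1 X)) : Prop :=
  exists (h : 'M[Spoly]_(r1 Y, r0 X)) (k : 'M[Spoly]_(r0 Y, r1 X)),
    [/\ homog_mx p q (d1 Y) (d0 X) (Lopp (vc p)) h,
        homog_mx p q (d0 Y) (d1 X) (0, 0) k,
        f0 = k *m mA X + mB Y *m h &
        f1 = mA Y *m k + h *m mB X].

(* Since W = (xy) f, the stabilisation
   of K_f is the rank-one matrix factorisation X0 --xy--> X1 --f--> X0(c),
   with X0 = S(-c) (generator in degree c) and X1 generated in degree c - x - y,
   whose cokernel coker(X1 --f--> X0(c)) = S/(f) = K_f. *)
Definition fS (p q : nat) : Spoly := xS ^+ (p.-1) + yS ^+ (q.-1).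
Definition Kf (p q : nat) : MFdata :=
  @MkMF 1 1 (fun _ => vc p) (fun _ => Lsub (vc p) (Ladd vx vy))
        (xS * yS)%:M (fS p q)%:M.
Arguments is_MFmor p q X Y f0 f1 : clear implicits.
Arguments null_homotopic p q X Y f0 f1 : clear implicits.

(* Main.v *)
Require Import Defs.
From mathcomp Require Import all_boot all_order all_algebra.
From mathcomp Require Import Rstruct complex.
From mathcomp Require Import zify ring.
Import GRing.Theory.
Local Open Scope ring_scope.

Definition mono (a b : nat) : Spoly := xS ^+ a * yS ^+ b.

Lemma coefS_inj (P Q : Spoly) :
  (forall a b, coefS P a b = coefS Q a b) -> P = Q.
Proof. move=> H; apply/polyP=> b; apply/polyP=> a; exact: H. Qed.

Lemma coefS_monoM i j (P : Spoly) a b :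
  coefS (xS ^+ i * yS ^+ j * P) a b =
  if (i <= a)%N && (j <= b)%N then coefS P (a - i) (b - j) else 0.
Proof.
rewrite /coefS /xS /yS -rmorphXn -mulrA mulrCA coefXnM.
case: (ltnP b j) => Hb; first by rewrite andbF coef0.
rewrite andbT coefCM coefXnM; case: (ltnP a i) => //.
Qed.

Lemma coefS_mono a b a' b' :
  coefS (mono a b) a' b' != 0 -> a' = a /\ b' = b.
Proof.
rewrite -[mono a b]mulr1 coefS_monoM.
case: ifP => [/andP [Ha Hb]|]; last by rewrite eqxx.
rewrite /coefS coefC; case: (eqVneq (b' - b)%N 0%N) => Eb; last by rewrite coef0 eqxx.
rewrite coefC; case: (eqVneq (a' - a)%N 0%N) => Ea; last by rewrite eqxx.
move=> _; split; apply/eqP; rewrite eqn_leq; apply/andP; split => //;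
 by rewrite -subn_eq0; apply/eqP.
Qed.

Lemma coefSD (P Q : Spoly) a b : coefS (P + Q) a b = coefS P a b + coefS Q a b.
Proof. by rewrite /coefS !coefD. Qed.
Lemma coefSN (P : Spoly) a b : coefS (- P) a b = - coefS P a b.
Proof. by rewrite /coefS !coefN. Qed.
Lemma coefSC (c : CC) (P : Spoly) a b : coefS (c%:P%:P * P) a b = c * coefS P a b.
Proof. by rewrite /coefS !coefCM. Qed.
Lemma coefS0 a b : coefS 0 a b = 0.
Proof. by rewrite /coefS !coef0. Qed.

Section H.
Variables p q : nat.

Lemma homog0 l : homog p q l 0.
Proof. by move=> a b; rewrite coefS0 eqxx. Qed.

Lemma homogD l P Q : homog p q l P -> homog p q l Q -> homog p q l (P + Q).
Proof.
move=> HP HQ a b; rewrite coefSD.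
case: (eqVneq (coefS P a b) 0) => [->|]; first by rewrite add0r; exact: HQ.
by move=> /HP.
Qed.

Lemma homogN l P : homog p q l P -> homog p q l (- P).
Proof. by move=> HP a b; rewrite coefSN oppr_eq0; exact: HP. Qed.

Lemma homogC l c P : homog p q l P -> homog p q l (c%:P%:P * P).
Proof.
move=> HP a b; rewrite coefSC; case: (eqVneq (coefS P a b) 0) => [->|].
  by rewrite mulr0 eqxx.
by move=> /HP.
Qed.

Lemma homog_mono l a b : Lequiv p q (a%:Z, b%:Z) l -> homog p q l (mono a b).
Proof. by move=> H a' b' /coefS_mono [-> ->]. Qed.

Lemma homog_eq l l' P : l = l' -> homog p q l P -> homog p q l' P.
Proof. by move=> ->. Qed.

End H.

Lemma pairE (a b c d : int) : a = c -> b = d -> (a, b) = (c, d).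
Proof. by move=> -> ->. Qed.

Definition D0 (p : nat) (j : int) : Ldeg := (p%:Z - j * p%:Z, 1 - j).
Definition D1 (p : nat) (j : int) : Ldeg := (p%:Z - 1 - j * p%:Z, - j).
Definition Sh0 (p q : nat) (j : int) : MFdata :=
  @MkMF 1 1 (fun _ => D0 p j) (fun _ => D1 p j) (xS * yS)%:M (fS p q)%:M.
Definition Sh1 (p q : nat) (j : int) : MFdata :=
  @MkMF 1 1 (fun _ => D1 p j) (fun _ => D0 p (j + 1)) (- fS p q)%:M (- (xS * yS))%:M.

Lemma MkMF11_eq e0 e1 e0' e1' A B A' B' :
  e0 = e0' -> e1 = e1' -> A = A' -> B = B' ->
  @MkMF 1 1 (fun _ => e0) (fun _ => e1) A B = @MkMF 1 1 (fun _ => e0') (fun _ => e1') A' B'.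
Proof. by move=> -> -> -> ->. Qed.

Section S.
Variables p q : nat.

Lemma Kf_Sh0 : Kf p q = Sh0 p q 0.
Proof.
apply: MkMF11_eq => //; apply: pairE => /=; lia.
Qed.

Lemma shift1_Sh0 j : shift1 p (Sh0 p q j) = Sh1 p q j.
Proof.
rewrite /shift1 /=; apply: MkMF11_eq; rewrite ?raddfN //.
apply: pairE => /=; lia.
Qed.

Lemma shift1_Sh1 j : shift1 p (Sh1 p q j) = Sh0 p q (j + 1).
Proof.
rewrite /shift1 /=; apply: MkMF11_eq; rewrite ?raddfN ?opprK //.
apply: pairE => /=; lia.
Qed.

Lemma shiftm1_Sh0 j : shiftm1 p (Sh0 p q j) = Sh1 p q (j - 1).
Proof.
rewrite /shiftm1 /=; apply: MkMF11_eq; rewrite ?raddfN //;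
apply: pairE => /=; lia.
Qed.

Lemma shiftm1_Sh1 j : shiftm1 p (Sh1 p q j) = Sh0 p q j.
Proof.
rewrite /shiftm1 /=; apply: MkMF11_eq; rewrite ?raddfN ?opprK //;
apply: pairE => /=; lia.
Qed.

Lemma iter_pos m : iter (m.*2) (shift1 p) (Kf p q) = Sh0 p q m%:Z
  /\ iter (m.*2.+1) (shift1 p) (Kf p q) = Sh1 p q m%:Z.
Proof.
elim: m => [|m [IH1 IH2]]; first by rewrite /= Kf_Sh0 shift1_Sh0.
have E : iter (m.+1).*2 (shift1 p) (Kf p q) = Sh0 p q m.+1%:Z.
  by rewrite doubleS /= IH1 shift1_Sh0 shift1_Sh1; congr Sh0; lia.
by split; rewrite // iterS E shift1_Sh0.
Qed.

Lemma iter_neg m : iter (m.*2) (shiftm1 p) (Kf p q) = Sh0 p q (- m%:Z)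
  /\ iter (m.*2.+1) (shiftm1 p) (Kf p q) = Sh1 p q (- m%:Z - 1).
Proof.
elim: m => [|m [IH1 IH2]]; first by rewrite /= Kf_Sh0 shiftm1_Sh0.
have E : iter (m.+1).*2 (shiftm1 p) (Kf p q) = Sh0 p q (- m.+1%:Z).
  by rewrite doubleS /= IH1 shiftm1_Sh0 shiftm1_Sh1; congr Sh0; lia.
by split; rewrite // iterS E shiftm1_Sh0; congr Sh1; lia.
Qed.

Lemma Kshape (n : int) :
  (exists j, n = j * 2 /\ shift p n (Kf p q) = Sh0 p q j) \/
  (exists j, n = j * 2 + 1 /\ shift p n (Kf p q) = Sh1 p q j).
Proof.
case: n => k; rewrite /shift.
  have Hk := odd_double_half k.
  case: (iter_pos k./2) => E1 E2.
  case Ok: (odd k) Hk => /= Hk.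
    right; exists (k./2)%:Z; split; first lia.
    by rewrite -{1}Hk add1n.
  left; exists (k./2)%:Z; split; first lia.
  by rewrite -{1}Hk add0n.
have -> : Negz k = - (k.+1)%:Z by rewrite NegzE.
move: k.+1 => {k} k.
have Hk := odd_double_half k.
case: (iter_neg k./2) => E1 E2.
case Ok: (odd k) Hk => /= Hk.
  right; exists (- k./2%:Z - 1); split; first lia.
  by rewrite -{1}Hk add1n.
left; exists (- k./2%:Z); split; first lia.
by rewrite -{1}Hk add0n.
Qed.
End S.

Section C.
Variables p' q' : nat.
Local Notation p := p'.+2.
Local Notation q := q'.+2.

Definition IdealJ (j : int) (g : Spoly) := exists h k,
  [/\ homog p q (1 + j * p%:Z - p%:Z, j) h, homog p q (j * p%:Z - 1, j - 1) k &
      g = k * (xS * yS) + fS p q * h].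

Lemma IdealJ0 j : IdealJ j 0.
Proof. exists 0, 0; split; rewrite ?mul0r ?mulr0 ?addr0 //; exact: homog0. Qed.

Lemma IdealJD j g1 g2 : IdealJ j g1 -> IdealJ j g2 -> IdealJ j (g1 + g2).
Proof.
move=> [h1 [k1 [H1 K1 E1]]] [h2 [k2 [H2 K2 E2]]].
exists (h1 + h2), (k1 + k2); split; try exact: homogD.
rewrite E1 E2; ring.
Qed.

Lemma IdealJC j c g : IdealJ j g -> IdealJ j (c%:P%:P * g).
Proof.
move=> [h [k [H K E]]]; exists (c%:P%:P * h), (c%:P%:P * k); split; try exact: homogC.
rewrite E; ring.
Qed.

Lemma mono_ideal j a b : j != 0 -> Lequiv p q (a%:Z, b%:Z) (j * p%:Z, j) ->
  IdealJ j (mono a b).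
Proof.
move=> Hj [k [E1 E2]]; rewrite /= in E1 E2.
case: b E2 => [|b'] E2.
  case: a E1 => [|a'] E1.
    exfalso.
    have Hj' : j = k * (q'.+2%:Z - 1) by lia.
    rewrite Hj' in E1 Hj.
    have : k * ((q'.+2%:Z - 1) * p'.+2%:Z + p'.+1%:Z) = 0.
      rewrite mulrDr mulrA; lia.
    move/eqP; rewrite mulf_eq0 => /orP [/eqP Hk|/eqP H]; last by lia.
    by move: Hj; rewrite Hk mul0r eqxx.
  have Ha : (p <= a'.+1)%N.
    have Hj' : j = k * (q'.+2%:Z - 1) by lia.
    rewrite Hj' in E1 Hj.
    set M : int := (q'.+1%:Z * p'.+2%:Z + p'.+1%:Z).
    have HM : a'.+1%:Z = k * M by rewrite /M; lia.
    have HMp : p'.+2%:Z <= M by rewrite /M; nia.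
    have Hk : 0 < k by nia.
    nia.
  have [t Et] : exists t, a'.+1 = (t + p)%N by exists (a'.+1 - p)%N; rewrite subnK.
  rewrite Et in E1 *.
  exists (mono t.+1 0), (- mono t q'); split.
  - by apply: homog_mono; exists k; split => /=; lia.
  - by apply: homogN; apply: homog_mono; exists (k - 1); split => /=; lia.
  - rewrite /mono /fS /= !exprD !exprS !expr0; ring.
case: a E1 => [|a'] E1.
  have Hb : (q <= b'.+1)%N.
    have Hk : k < 0.
      have [//|Hk] : (k < 0) \/ (0 <= k) by lia.
      have H : j * p'.+2%:Z <= 0 by nia.
      have Hj0 : j < 0 by move: Hj; nia.
      nia.
    have : 0 < j by nia.
    nia.
  have [s Es] : exists s, b'.+1 = (s + q)%N by exists (b'.+1 - q)%N; rewrite subnK.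
  rewrite Es in E2 *.
  exists (mono 0 s.+1), (- mono p' s); split.
  - by apply: homog_mono; exists (k + 1); split => /=; lia.
  - by apply: homogN; apply: homog_mono; exists (k + 1); split => /=; lia.
  - rewrite /mono /fS /= !exprD !exprS !expr0; ring.
exists 0, (mono a' b'); split.
- exact: homog0.
- by apply: homog_mono; exists k; split => /=; lia.
- rewrite /mono /fS /= !exprS; ring.
Qed.

End C.

Lemma decomp (g : Spoly) :
  g = \sum_(b < size g) \sum_(a < size g`_b) (coefS g a b)%:P%:P * mono a b.
Proof.
rewrite -{1}[g]coefK poly_def; apply: eq_bigr => b _.
rewrite -mul_polyC -{1}[g`_b]coefK poly_def rmorph_sum mulr_suml; apply: eq_bigr => a _.
by rewrite /mono /coefS /xS /yS -mul_polyC rmorphM rmorphXn mulrA.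
Qed.

Section D.
Variables p' q' : nat.
Local Notation p := p'.+2.
Local Notation q := q'.+2.

Lemma L3 j g : j != 0 -> homog p q (j * p%:Z, j) g -> IdealJ p' q' j g.
Proof.
move=> Hj Hg; rewrite (decomp g).
apply: (big_ind (IdealJ p' q' j)); [exact: IdealJ0| exact: IdealJD|] => b _.
apply: (big_ind (IdealJ p' q' j)); [exact: IdealJ0| exact: IdealJD|] => a _.
case: (eqVneq (coefS g a b) 0) => [->|Hc].
  by rewrite !polyC0 mul0r; exact: IdealJ0.
by apply: IdealJC; apply: mono_ideal => //; exact: Hg.
Qed.

Lemma L2 g : homog p q (0, 0) g -> g = (coefS g 0 0)%:P%:P.
Proof.
move=> Hg; apply: coefS_inj => a b.
rewrite /coefS coefC; case: (eqVneq b 0%N) => [->|Hb]; rewrite ?coefC.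
  case: (eqVneq a 0%N) => [->//|Ha].
  apply/eqP; apply: contraT => /Hg [k [E1 E2]].
  exfalso; rewrite /= in E1 E2; move/eqP: Ha; apply; nia.
rewrite if_same; apply/eqP; apply: contraT => /Hg [k [E1 E2]].
exfalso; rewrite /= in E1 E2; move/eqP: Hb; apply; nia.
Qed.

Lemma xS_neq0 : xS != 0. Proof. by rewrite /xS polyC_eq0 polyX_eq0. Qed.
Lemma yS_neq0 : yS != 0. Proof. by rewrite /yS polyX_eq0. Qed.
Lemma xy_neq0 : xS * yS != 0. Proof. by rewrite mulf_neq0 ?xS_neq0 ?yS_neq0. Qed.

Lemma divxy (g0 g1 : Spoly) : g1 * (xS * yS) = - fS p q * g0 ->
  exists u, g0 = xS * yS * u.
Proof.
move=> E.
have H0 : g0`_0 = 0.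
  have := congr1 (fun P : Spoly => P`_0) E.
  rewrite /= /yS mulrA coefMX /= coef0M coefN /fS /= coefD /xS -rmorphXn coefC coefXn /=.
  rewrite addr0 => /esym /eqP; rewrite mulf_eq0 oppr_eq0 expf_eq0 polyX_eq0 andbF /=.
  by move/eqP.
have H1 : forall b, (g0`_b)`_0 = 0.
  have Ex : map_poly (horner_eval (0:CC)) xS = 0.
    by rewrite /xS map_polyC /= horner_evalE hornerX.
  have Ey : map_poly (horner_eval (0:CC)) yS = 'X by rewrite /yS map_polyX.
  have := congr1 (map_poly (horner_eval (0:CC))) E.
  rewrite !rmorphM rmorphN /fS rmorphD !rmorphXn.
  rewrite -[_ xS]/(map_poly (horner_eval (0:CC)) xS) Ex -[_ yS]/(map_poly (horner_eval (0:CC)) yS) Ey.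
  rewrite mul0r mulr0 expr0n /= add0r => /esym /eqP.
  rewrite mulf_eq0 oppr_eq0 expf_eq0 polyX_eq0 andbF /= => /eqP Hg b.
  have := congr1 (fun P : {poly CC} => P`_b) Hg.
  by rewrite coef_map /= horner_evalE horner_coef0 coef0.
exists (drop_poly 1 (map_poly (drop_poly 1) g0)).
apply: coefS_inj => a b.
rewrite -[xS]expr1 -[yS]expr1 coefS_monoM.
case: a => [|a]; first by rewrite /coefS H1.
case: b => [|b]; first by rewrite /coefS H0 coef0.
rewrite /= !subn1 /= /coefS coef_drop_poly coef_map /= coef_drop_poly !addn1.
by [].
Qed.

Lemma homog_div l (u : Spoly) :
  homog p q (l.1 + 1, l.2 + 1) (xS * yS * u) -> homog p q l u.
Proof.
move=> H a b Hc; have := H a.+1 b.+1.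
rewrite -[xS]expr1 -[yS]expr1 coefS_monoM /= !subn1 /= => /(_ Hc) [k [E1 E2]].
by exists k; rewrite /= in E1 E2 *; split; lia.
Qed.
End D.

Lemma sc_inj (a b : Spoly) : (a%:M : 'M_1) = b%:M -> a = b.
Proof. by move/(congr1 (fun M : 'M_1 => M 0 0)); rewrite !mxE. Qed.

Lemma homog_sc p q e e' l (a : Spoly) : homog p q (Ladd (Lsub e' e) l) a ->
  homog_mx p q (fun _ : 'I_1 => e) (fun _ : 'I_1 => e') l a%:M.
Proof. by move=> H i j; rewrite (ord1 i) (ord1 j) mxE eqxx mulr1n. Qed.

Lemma homog_mx0 p q m n (e : 'I_m -> Ldeg) (e' : 'I_n -> Ldeg) l :
  homog_mx p q e e' l 0.
Proof. by move=> i j; rewrite mxE; exact: homog0. Qed.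

Section E.
Variables p' q' : nat.
Local Notation p := p'.+2.
Local Notation q := q'.+2.

Lemma even_case j f0 f1 : j != 0 ->
  is_MFmor p q (Sh0 p q 0) (Sh0 p q j) f0 f1 ->
  null_homotopic p q (Sh0 p q 0) (Sh0 p q j) f0 f1.
Proof.
move=> Hj [H0 H1 E1 E2].
have [g0 Hf0] : exists g0, f0 = g0%:M by exists (f0 0 0); exact: mx11_scalar.
have [g1 Hf1] : exists g1, f1 = g1%:M by exists (f1 0 0); exact: mx11_scalar.
subst f0 f1.
have Hg0 := H0 0 0; rewrite mxE eqxx mulr1n in Hg0.
move: E1; rewrite /= -!scalar_mxM => /sc_inj E1.
have E10 : g1 = g0.
  by apply: (mulIf (@xy_neq0)); rewrite E1 mulrC.
have [h [k [Hh Hk E]]] : IdealJ p' q' j (g0).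
  apply: L3 => //; apply: homog_eq Hg0; apply: pairE => /=; lia.
exists h%:M, k%:M; split => /=.
- apply: homog_sc; apply: homog_eq Hh; apply: pairE => /=; lia.
- apply: homog_sc; apply: homog_eq Hk; apply: pairE => /=; lia.
- by rewrite -!scalar_mxM -raddfD E.
- rewrite -!scalar_mxM -raddfD E10 E; congr (_%:M); ring.
Qed.

Lemma odd_case j f0 f1 :
  is_MFmor p q (Sh0 p q 0) (Sh1 p q j) f0 f1 ->
  null_homotopic p q (Sh0 p q 0) (Sh1 p q j) f0 f1.
Proof.
move=> [H0 H1 E1 E2].
have [g0 Hf0] : exists g0, f0 = g0%:M by exists (f0 0 0); exact: mx11_scalar.
have [g1 Hf1] : exists g1, f1 = g1%:M by exists (f1 0 0); exact: mx11_scalar.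
subst f0 f1.
have Hg0 := H0 0 0; rewrite mxE eqxx mulr1n in Hg0.
move: E1; rewrite /= -!scalar_mxM => /sc_inj E1.
have [u Eu] := @divxy p' q' _ _ E1.
have E1u : g1 = - fS p q * u.
  apply: (mulIf (@xy_neq0)); rewrite E1 Eu; ring.
exists 0, u%:M; split => /=.
- exact: homog_mx0.
- apply: homog_sc; apply: (@homog_div p' q'); rewrite -Eu.
  apply: homog_eq Hg0; apply: pairE => /=; lia.
- by rewrite mulmx0 addr0 -scalar_mxM Eu mulrC.
- by rewrite mul0mx addr0 -scalar_mxM E1u.
Qed.

Lemma endo_case f0 f1 : is_MFmor p q (Sh0 p q 0) (Sh0 p q 0) f0 f1 ->
  exists lam : CC,
    null_homotopic p q (Sh0 p q 0) (Sh0 p q 0)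
      (f0 - (lam%:P%:P)%:M) (f1 - (lam%:P%:P)%:M).
Proof.
move=> [H0 H1 E1 E2].
have [g0 Hf0] : exists g0, f0 = g0%:M by exists (f0 0 0); exact: mx11_scalar.
have [g1 Hf1] : exists g1, f1 = g1%:M by exists (f1 0 0); exact: mx11_scalar.
subst f0 f1.
have Hg0 := H0 0 0; rewrite mxE eqxx mulr1n in Hg0.
move: E1; rewrite /= -!scalar_mxM => /sc_inj E1.
have E10 : g1 = g0.
  by apply: (mulIf (@xy_neq0)); rewrite E1 mulrC.
have Ec : g0 = (coefS g0 0 0)%:P%:P.
  apply: (@L2 p' q'); apply: homog_eq Hg0; apply: pairE => /=; lia.
exists (coefS (g0) 0 0); exists 0, 0; split => /=; try exact: homog_mx0.
- by rewrite {1}Ec subrr mul0mx mulmx0 addr0.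
- by rewrite E10 {1}Ec subrr mul0mx mulmx0 addr0.
Qed.

Lemma not_null : ~ null_homotopic p q (Sh0 p q 0) (Sh0 p q 0) 1%:M 1%:M.
Proof.
move=> [h [k [_ _ E _]]].
move: E; rewrite /= [h]mx11_scalar [k]mx11_scalar -!scalar_mxM -raddfD => /sc_inj E.
have := congr1 (fun P : Spoly => (P.[0]).[0]) E.
rewrite /fS /xS /yS /= !hornerE /= !hornerE /= !exprS !mul0r ?add0r ?mul0r.
by move/eqP; rewrite oner_eq0.
Qed.
End E.

Theorem lemma2p6 (p q : nat) (hp : (2 <= p)%N) (hq : (2 <= q)%N) :
  [/\ is_MF p q (Kf p q),
      (forall (n : int) f0 f1,
          n != 0 -> is_MFmor p q (Kf p q) (shift p n (Kf p q)) f0 f1 ->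
          null_homotopic p q (Kf p q) (shift p n (Kf p q)) f0 f1),
      (forall f0 f1, is_MFmor p q (Kf p q) (Kf p q) f0 f1 ->
          exists lam : CC,
            null_homotopic p q (Kf p q) (Kf p q)
              (f0 - (lam%:P%:P)%:M) (f1 - (lam%:P%:P)%:M)) &
      ~ null_homotopic p q (Kf p q) (Kf p q) 1%:M 1%:M].
Proof.
case: p hp => [|[|p']] // _; case: q hq => [|[|q']] // _.
split.
- rewrite Kf_Sh0; split => /=.
  + apply: homog_sc; rewrite -[xS]expr1 -[yS]expr1.
    rewrite -/(mono 1 1).
    by apply: homog_mono; exists 0; split => /=; lia.
  + apply: homog_sc.
    have -> : fS p'.+2 q'.+2 = mono p'.+1 0 + mono 0 q'.+1.
      by rewrite /mono /fS /= !expr0 mulr1 mul1r.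
    apply: homogD; apply: homog_mono.
      by exists 0; split => /=; lia.
    by exists (-1); split => /=; lia.
  + by rewrite -scalar_mxM /W /fS /=; congr (_%:M); rewrite !exprS; ring.
  + by rewrite -scalar_mxM /W /fS /=; congr (_%:M); rewrite !exprS; ring.
- move=> n; case: (Kshape p'.+2 q'.+2 n) => [[j [-> Ej]]|[j [-> Ej]]];
    rewrite Ej Kf_Sh0 => f0 f1 Hn.
    apply: even_case; apply: contraNneq Hn => ->; by rewrite mul0r.
  exact: odd_case.
- rewrite Kf_Sh0; exact: endo_case.
- rewrite Kf_Sh0; exact: not_null.
Qed.
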